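(* $i(\vec P_3)\geq \frac{2}{5}$ and $i(\vec C_4)\geq \frac{2}{21}$.
   Context: An orgraph (oriented graph) is a directed graph with no loops, no multiple edges, and no pair of vertices joined by edges in both directions. For a finite orgraph $\Gamma$ and an integer $n$, let $max(\Gamma;n)$ be the maximum, over all orgraphs $G$ on $n$ vertices, of the number of vertex subsets $T\subseteq V(G)$ with $|T|=|V(\Gamma)|$ such that the subgraph of $G$ induced by $T$ is isomorphic to $\Gamma$ (each such set is counted once, regardless of automorphisms of $\Gamma$). The inducibility of $\Gamma$ is $i(\Gamma):=\limsup_{n\to\infty} max(\Gamma;n)/\binom{n}{|V(\Gamma)|}$. Here $\vec P_3$ is the orgraph on vertices $a,b,c$ with edges $a\to b$ and $b\to c$ only (directed path with 3 vertices), and $\vec C_4$ is the orgraph on vertices $v_1,v_2,v_3,v_4$ with edges $v_1\to v_2$, $v_2\to v_3$, $v_3\to v_4$, $v_4\to v_1$ only (directed 4-cycle). *)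

(* Defs.v *)
From HB Require Import structures.
From mathcomp Require Import all_boot all_order all_algebra.
From mathcomp Require Import all_classical all_reals all_analysis.
Set Implicit Arguments. Unset Strict Implicit. Unset Printing Implicit Defensive.
Import Order.TTheory GRing.Theory Num.Theory.

(* A (finite) digraph on vertex set 'I_n is encoded by its edge indicator
   G : {ffun 'I_n * 'I_n -> bool}, G (x, y) = true iff there is an edge x -> y. *)
Definition digraph (n : nat) := {ffun 'I_n * 'I_n -> bool}.

(* orgraph: no loops, no pair of opposite edges (no multiple edges is automatic) *)
Definition is_orgraph n (G : digraph n) : bool :=
  [forall x, ~~ G (x, x)] && [forall x, forall y, ~~ (G (x, y) && G (y, x))].

Definition induces_copy k n (Gam : digraph k) (G : digraph n) (T : {set 'I_n}) : bool :=
  [exists f : {ffun 'I_k -> 'I_n},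
     [&& injectiveb f, f @: setT == T &
         [forall a, forall b, Gam (a, b) == G (f a, f b)]]].

Definition ind_count k n (Gam : digraph k) (G : digraph n) : nat :=
  #|[set T : {set 'I_n} | induces_copy Gam G T]|.

Definition max_ind k (Gam : digraph k) (n : nat) : nat :=
  \max_(G : digraph n | is_orgraph G) ind_count Gam G.

Definition inducibility (R : realType) k (Gam : digraph k) : \bar R :=
  limn_esup (fun n : nat => (((max_ind Gam n)%:R / ('C(n, k))%:R : R))%:E).

Definition P3 : digraph 3 :=
  [ffun e : 'I_3 * 'I_3 => ((e.1 : nat), (e.2 : nat)) \in [:: (0, 1); (1, 2)]].

Definition C4 : digraph 4 :=
  [ffun e : 'I_4 * 'I_4 => ((e.1 : nat), (e.2 : nat)) \in [:: (0, 1); (1, 2); (2, 3); (3, 0)]].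

(* Main.v *)
Require Import Defs.
From mathcomp Require Import all_boot all_order all_algebra.
From mathcomp Require Import all_classical all_reals all_analysis.
From mathcomp Require Import zify ring lra.
Import Order.TTheory GRing.Theory Num.Theory.
Set Implicit Arguments. Unset Strict Implicit. Unset Printing Implicit Defensive.

Fixpoint E (k x y : nat) : bool :=
  match k with
  | 0 => false
  | k'.+1 => if x %% 4 == y %% 4 then E k' (x %/ 4) (y %/ 4)
             else (y %% 4 == (x %% 4).+1 %% 4)
  end.

Lemma E_irr k x : E k x x = false.
Proof. by elim: k x => //= k IH x; rewrite eqxx IH. Qed.

Lemma E_asym k x y : E k x y && E k y x = false.
Proof.
elim: k x y => //= k IH x y; rewrite eq_sym.
case: eqP => _; first exact: IH.
apply/negbTE/negP => /andP [/eqP h1 /eqP h2].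
have := ltn_pmod x (isT : 0 < 4); have := ltn_pmod y (isT : 0 < 4).
move: h1 h2; set a := x %% 4; set b := y %% 4 => h1 h2 ha hb.
move: a b h1 h2 ha hb => [|[|[|[|a]]]] [|[|[|[|b]]]] //.
Qed.

Definition G m : digraph (4 ^ m) := [ffun e : 'I_(4 ^ m) * 'I_(4 ^ m) => E m e.1 e.2].

Lemma G_org m : is_orgraph (G m).
Proof.
apply/andP; split; apply/forallP => x; rewrite ?ffunE /= ?E_irr //.
by apply/forallP => y; rewrite !ffunE /= E_asym.
Qed.

Lemma mk_proof m (x : 'I_(4 ^ m)) (c : 'I_4) : x * 4 + c < 4 ^ m.+1.
Proof. have := ltn_ord x; have := ltn_ord c; rewrite expnS; lia. Qed.

Definition mk m (x : 'I_(4 ^ m)) (c : 'I_4) : 'I_(4 ^ m.+1) := Ordinal (mk_proof x c).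

Lemma mk_mod m x c : (@mk m x c : nat) %% 4 = c.
Proof. by rewrite /= modnMDl modn_small. Qed.

Lemma mk_div m x c : (@mk m x c : nat) %/ 4 = x.
Proof. by rewrite /= divnMDl // divn_small // addn0. Qed.

Lemma mk_inj m x c y d : @mk m x c = mk y d -> x = y /\ c = d.
Proof.
move=> h; split; apply: val_inj.
  by move: (congr1 (fun z : 'I_(4 ^ m.+1) => (z : nat) %/ 4) h); rewrite !mk_div.
by move: (congr1 (fun z : 'I_(4 ^ m.+1) => (z : nat) %% 4) h); rewrite !mk_mod.
Qed.

Lemma G_mk m x c y d :
  G m.+1 (mk x c, @mk m y d) = if c == d then G m (x, y) else (d == (c.+1 %% 4) :> nat).
Proof.
rewrite !ffunE /= !mk_mod !mk_div.
by case: (c =P d) => [->|ne]; [rewrite !eqxx | case: eqP => // /val_inj].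
Qed.

Lemma copy_card k n (Gam : digraph k) (G1 : digraph n) T :
  induces_copy Gam G1 T -> #|T| = k.
Proof.
case/existsP => f /and3P [/injectiveP fi /eqP <- _].
rewrite card_imset // -[RHS](card_ord k); apply: eq_card => x; exact: in_setT.
Qed.

Lemma embed_copy k n n' (Gam : digraph k) (G1 : digraph n) (G2 : digraph n')
  (h : 'I_n -> 'I_n') T : injective h -> (forall x y, G2 (h x, h y) = G1 (x, y)) ->
  induces_copy Gam G1 T -> induces_copy Gam G2 (h @: T).
Proof.
move=> hi hG /existsP [f /and3P [/injectiveP fi /eqP fT /forallP fe]].
apply/existsP; exists [ffun a => h (f a)]; apply/and3P; split.
- by apply/injectiveP => a b; rewrite !ffunE => /hi /fi.
- by rewrite -fT -imset_comp; apply/eqP/eq_imset => a; rewrite ffunE.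
- apply/forallP => a; apply/forallP => b; rewrite !ffunE hG.
  by move/forallP: (fe a) => /(_ b).
Qed.

Lemma trans_copy k m (Gam : digraph k) (s : {ffun 'I_k -> 'I_4})
  (a : {ffun 'I_k -> 'I_(4 ^ m)}) : injective s ->
  (forall i j, Gam (i, j) = (s j == (s i).+1 %% 4 :> nat)) ->
  induces_copy Gam (G m.+1) ((fun i => mk (a i) (s i)) @: setT).
Proof.
move=> si hG; apply/existsP; exists [ffun i => mk (a i) (s i)]; apply/and3P; split.
- by apply/injectiveP => i j; rewrite !ffunE => /mk_inj [_ /si].
- by apply/eqP/eq_imset => i; rewrite ffunE.
- have fE i : [ffun i => mk (a i) (s i)] i = mk (a i) (s i) by rewrite ffunE.
  apply/forallP => i; apply/forallP => j; rewrite !fE G_mk hG.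
  case: (eqVneq i j) => [->|ne].
    rewrite eqxx ffunE /= E_irr.
    have := ltn_ord (s j); case: (s j) => [[|[|[|[|]]]]] //.
  by rewrite (inj_eq si) (negbTE ne).
Qed.

Lemma cnt_step k (Gam : digraph k) (Rt : finType) (sg : Rt -> {ffun 'I_k -> 'I_4})
  (i0 i1 : 'I_k) m :
  i0 != i1 ->
  (forall r, injective (sg r)) ->
  (forall r i j, Gam (i, j) = (sg r j == (sg r i).+1 %% 4 :> nat)) ->
  (forall r r', (forall i, exists j, sg r' j = sg r i) -> r = r') ->
  4 * ind_count Gam (G m) + #|Rt| * (4 ^ m) ^ k <= ind_count Gam (G m.+1).
Proof.
move=> i01 sgi hG hR.
set S := [set T | induces_copy Gam (G m) T].
set A1 := [set (fun x => mk x p.1) @: p.2 | p : 'I_4 * {set 'I_(4 ^ m)} in finset.setX (setTfor 'I_4) S].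
set A2 := [set (fun i => mk (p.2 i) (sg p.1 i)) @: setT
            | p : Rt * {ffun 'I_k -> 'I_(4 ^ m)} in setTfor (Rt * {ffun 'I_k -> 'I_(4 ^ m)})].
have mkinj c : injective (fun x : 'I_(4 ^ m) => mk x c).
  by move=> x y /mk_inj [].
have cA1 : #|A1| = 4 * ind_count Gam (G m).
  rewrite card_in_imset ?cardsX ?cardsT ?card_ord //.
  move=> [r T] [r' T'] /setXP [_ HT] /setXP [_ HT'] /= eqI.
  have /card_gt0P [x xT] : 0 < #|T|.
    by move: HT; rewrite inE => /copy_card ->; rewrite -(card_ord k); apply/card_gt0P; exists i0.
  have : mk x r \in (fun x => mk x r') @: T' by rewrite -eqI; apply: imset_f.
  case/imsetP => y _ /mk_inj [_ er]; subst r'.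
  congr pair; apply/setP => z.
  apply/idP/idP => zT.
    have : mk z r \in (fun x => mk x r) @: T' by rewrite -eqI; apply: imset_f.
    by case/imsetP => w wT /mk_inj [-> _].
  have : mk z r \in (fun x => mk x r) @: T by rewrite eqI; apply: imset_f.
  by case/imsetP => w wT /mk_inj [-> _].
have cA2 : #|A2| = #|Rt| * (4 ^ m) ^ k.
  rewrite card_in_imset ?cardsT ?card_prod ?card_ffun ?card_ord //.
  move=> [r a] [r' a'] _ _ /= eqI.
  have H i : exists j, mk (a i) (sg r i) = mk (a' j) (sg r' j).
    have : mk (a i) (sg r i) \in (fun i => mk (a' i) (sg r' i)) @: setT.
      by rewrite -eqI; apply: imset_f; exact: in_setT.
    by case/imsetP => j _ e; exists j.
  have er : r = r'.
    by apply: hR => i; have [j /mk_inj [_ e]] := H i; exists j.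
  subst r'; congr pair; apply/ffunP => i.
  have [j /mk_inj [e1 e2]] := H i.
  by move: e1; rewrite (sgi r _ _ e2).
have dis : A1 :&: A2 = finset.set0.
  apply/setP => X; rewrite !inE; apply/negbTE/negP => /andP [].
  case/imsetP => [[r T] _ ->] /imsetP [[r' a] _ /= eX].
  have hi i : sg r' i = r.
    have : mk (a i) (sg r' i) \in (fun x => mk x r) @: T by rewrite eX; apply: imset_f; exact: in_setT.
    by case/imsetP => y _ /mk_inj [].
  by move: i01; rewrite -(inj_eq (sgi r')) !hi eqxx.
have sub : A1 :|: A2 \subset [set T | induces_copy Gam (G m.+1) T].
  apply/fintype.subsetP => X; rewrite !inE => /orP [] /imsetP.
    move=> [[r T] /setXP [_]]; rewrite inE => HT -> /=.
    apply: embed_copy HT => // x y; by rewrite G_mk eqxx.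
  by move=> [[r a] _ ->]; apply: trans_copy.
rewrite -cA1 -cA2.
have := subset_leq_card sub; rewrite cardsU dis cards0 subn0.
by rewrite /ind_count.
Qed.

Definition sgP (r : 'I_4) : {ffun 'I_3 -> 'I_4} :=
  [ffun i : 'I_3 => Ordinal (ltn_pmod (r + 1 + i) (isT : 0 < 4))].

Lemma sgP_inj r : injective (sgP r).
Proof.
move=> i j; rewrite !ffunE => /(congr1 val) /= h; apply/val_inj => /=.
have := ltn_ord i; have := ltn_ord j; have := ltn_ord r; lia.
Qed.

Lemma sgP_G r i j : P3 (i, j) = (sgP r j == (sgP r i).+1 %% 4 :> nat).
Proof.
rewrite !ffunE /=.
move: r i j => [[|[|[|[|r]]]] Hr] [[|[|[|[|i]]]] Hi] [[|[|[|[|j]]]] Hj] //=.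
Qed.

Lemma sgP_R r r' : (forall i, exists j, sgP r' j = sgP r i) -> r = r'.
Proof.
move=> H; case: (eqVneq r r') => // ne.
have ne' : (r : nat) != r' by [].
have hi : (r' + 7 - r) %% 4 < 3.
  move: ne'; have := ltn_ord r; have := ltn_ord r'; move=> a b /eqP c; lia.
have [j /(congr1 val) e] := H (Ordinal hi); move: e; rewrite !ffunE /=.
have := ltn_ord r; have := ltn_ord r'; have := ltn_ord j; lia.
Qed.

Definition sgC (r : unit) : {ffun 'I_4 -> 'I_4} := [ffun i : 'I_4 => i].

Lemma sgC_G i j : C4 (i, j) = (sgC tt j == (sgC tt i).+1 %% 4 :> nat).
Proof.
rewrite !ffunE /=.
move: i j => [[|[|[|[|i]]]] Hi] [[|[|[|[|j]]]] Hj] //=.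
Qed.

Lemma stepP m : 4 * ind_count P3 (G m) + 4 * (4 ^ m) ^ 3 <= ind_count P3 (G m.+1).
Proof.
have := @cnt_step 3 P3 _ sgP (inord 0) (inord 1) m; rewrite card_ord; apply.
- by rewrite -(inj_eq val_inj) /= !inordK.
- exact: sgP_inj.
- exact: sgP_G.
- exact: sgP_R.
Qed.

Lemma stepC m : 4 * ind_count C4 (G m) + (4 ^ m) ^ 4 <= ind_count C4 (G m.+1).
Proof.
have := @cnt_step 4 C4 _ sgC (inord 0) (inord 1) m; rewrite card_unit mul1n; apply.
- by rewrite -(inj_eq val_inj) /= !inordK.
- by move=> r i j; rewrite !ffunE.
- by move=> [] i j; exact: sgC_G.
- by move=> [] [].
Qed.

Lemma lbP m : (4 ^ m) ^ 3 <= 15 * ind_count P3 (G m) + 4 ^ m.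
Proof.
elim: m => [|m IH]; first exact: leq_trans (leq_addl _ _).
have := stepP m; move: (ind_count P3 (G m.+1)) (ind_count P3 (G m)) IH => a b IH.
move=> h; rewrite [4 ^ m.+1]expnS; move: (4 ^ m) IH h => N IH h.
rewrite ?expnS ?expn0 ?muln1 in IH h *; nia.
Qed.

Lemma lbC m : (4 ^ m) ^ 4 <= 252 * ind_count C4 (G m) + 4 ^ m.
Proof.
elim: m => [|m IH]; first exact: leq_trans (leq_addl _ _).
have := stepC m; move: (ind_count C4 (G m.+1)) (ind_count C4 (G m)) IH => a b IH.
move=> h; rewrite [4 ^ m.+1]expnS; move: (4 ^ m) IH h => N IH h.
rewrite ?expnS ?expn0 ?muln1 in IH h *; nia.
Qed.

Lemma max_ge k (Gam : digraph k) m : ind_count Gam (G m) <= max_ind Gam (4 ^ m).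
Proof. rewrite /max_ind; apply: (leq_bigmax_cond (F := fun G0 => ind_count Gam G0)); exact: G_org. Qed.

Lemma N_ge m : 4 <= 4 ^ m.+1.
Proof. by rewrite expnS leq_pmulr // expn_gt0. Qed.

Lemma boundP m : 2 * 'C(4 ^ m.+1, 3) <= 5 * max_ind P3 (4 ^ m.+1).
Proof.
have := lbP m.+1; have := max_ge P3 m.+1; have := N_ge m.
have := bin_ffact (4 ^ m.+1) 3.
move: (ind_count P3 _) => c.
move: (4 ^ m.+1) (max_ind P3 _) ('C(_, 3)) => N M C.
case: N => [|[|N]] //; rewrite !ffactnS ffactn0 /= => e _ h1 h2.
rewrite (_ : 3`! = 6) // in e; rewrite !expnS expn0 in h2; nia.
Qed.


Lemma boundC m : 2 * 'C(4 ^ m.+1, 4) <= 21 * max_ind C4 (4 ^ m.+1).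
Proof.
have := lbC m.+1; have := max_ge C4 m.+1; have := N_ge m.
have := bin_ffact (4 ^ m.+1) 4.
move: (ind_count C4 _) => c.
move: (4 ^ m.+1) (max_ind C4 _) ('C(_, 4)) => N M C.
case: N => [|[|[|N]]] //; rewrite !ffactnS ffactn0 /= => e _ h1 h2.
rewrite (_ : 4`! = 24) // in e; rewrite !expnS expn0 in h2; nia.
Qed.

Local Open Scope ring_scope.
Local Open Scope ereal_scope.

Lemma esup_ge (R : realType) (u : (\bar R)^nat) c :
  (forall n, exists2 k, (n <= k)%N & c <= u k) -> c <= limn_esup u.
Proof.
move=> H; rewrite limn_esup_lim; apply: lime_ge; first exact: is_cvg_esups.
near=> n; have [k nk ck] := H n.
apply: (le_trans ck); apply: ereal_sup_ubound; by exists k.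
Unshelve. all: by end_near. Qed.


Lemma nk n : (n <= 4 ^ n.+1)%N.
Proof. have := ltn_expl n (isT : (1 < 4)%N); rewrite expnS; lia. Qed.

Theorem mainTheorem1 (R : realType) :
  ((2 / 5 : R)%:E <= inducibility R P3) /\ ((2 / 21 : R)%:E <= inducibility R C4).
Proof.
split; apply: esup_ge => n; exists (4 ^ n.+1)%N; rewrite ?nk // lee_fin.
- have C0 : (0 < 'C(4 ^ n.+1, 3))%N by rewrite bin_gt0; have := N_ge n; lia.
  have := boundP n; move: (max_ind _ _) ('C(_, _)) C0 => M C C0 h.
  rewrite ler_pdivlMr ?ltr0n //.
  have : ((2 * C)%:R <= (5 * M)%:R :> R)%R by rewrite ler_nat.
  rewrite !natrM; lra.
- have C0 : (0 < 'C(4 ^ n.+1, 4))%N by rewrite bin_gt0; have := N_ge n; lia.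
  have := boundC n; move: (max_ind _ _) ('C(_, _)) C0 => M C C0 h.
  rewrite ler_pdivlMr ?ltr0n //.
  have : ((2 * C)%:R <= (21 * M)%:R :> R)%R by rewrite ler_nat.
  rewrite !natrM; lra.
Qed.
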